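(* For every integer $n\geq 3$, the cycle $C_n$ on $n$ vertices satisfies $\operatorname{th}_{\operatorname{H}}(C_n)=\lceil 2\sqrt{n-2}+1\rceil$.
   Context: All graphs are finite, simple and undirected. Hopping color change rule: a blue vertex $v$ may force a white vertex $w$ to become blue if $v$ has not previously performed a force and every neighbor of $v$ is blue. For an initial blue set $B$, a chronological list of forces of $B$ is a sequence of such forces applied one at a time until no further force is possible; its underlying unordered set is a set of forces of $B$. $B$ is a hopping forcing set if some chronological list of forces of $B$ turns all vertices blue. For a set of forces $\mathcal F$ of $B$, let $\mathcal F^{(0)}=B$ and for $t\geq1$ let $\mathcal F^{(t)}$ be the set of vertices $w\notin U_{t-1}:=\bigcup_{i=0}^{t-1}\mathcal F^{(i)}$ for which there is $(v\to w)\in\mathcal F$ with $v\in U_{t-1}$ and all neighbors of $v$ in $U_{t-1}$. $\operatorname{pt}_{\operatorname{H}}(G;\mathcal F)$ is the least $t$ with $\bigcup_{i=0}^t\mathcal F^{(i)}=V(G)$ ($\infty$ if none); $\operatorname{pt}_{\operatorname{H}}(G;B)$ is the minimum of $\operatorname{pt}_{\operatorname{H}}(G;\mathcal F)$ over sets of forces $\mathcal F$ of $B$ ($\infty$ if $B$ is not a hopping forcing set). $\operatorname{th}_{\operatorname{H}}(G)=\min_{B\subseteq V(G)}\big(|B|+\operatorname{pt}_{\operatorname{H}}(G;B)\big)$. *)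

(* Defs.v *)
From Stdlib Require Import Reals.
From mathcomp Require Import all_boot.
Set Implicit Arguments.
Unset Strict Implicit.
Unset Printing Implicit Defensive.

Definition simple_graph (T : finType) (e : rel T) : Prop :=
  symmetric e /\ irreflexive e.

Definition cycle_adj (n : nat) : rel 'I_n :=
  fun i j => (val j == i.+1 %% n) || (val i == j.+1 %% n).
Arguments cycle_adj n : clear implicits.

Section Hopping.
Variables (T : finType) (e : rel T).

(* With current blue set [blue] and set [used] of vertices that already
   performed a force, v may force w under the hopping rule. *)
Definition can_force (blue used : {set T}) (v w : T) : bool :=
  [&& v \in blue, v \notin used, w \notin blue &
      [forall u, e v u ==> (u \in blue)]].

Fixpoint chron_from (blue used : {set T}) (s : seq (T * T)) : bool :=
  match s with
  | [::] => [forall v, forall w, ~~ can_force blue used v w]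
  | (v, w) :: s' => can_force blue used v w && chron_from (w |: blue) (v |: used) s'
  end.

Definition chronological_list (B : {set T}) (s : seq (T * T)) : bool :=
  chron_from B set0 s.

Definition set_of_forces (B : {set T}) (F : {set T * T}) : Prop :=
  exists s, chronological_list B s /\ F = [set x in s].

Fixpoint Uset (B : {set T}) (F : {set T * T}) (t : nat) : {set T} :=
  match t with
  | 0 => B
  | t'.+1 =>
      let U := Uset B F t' in
      U :|: [set w | (w \notin U) &&
                     [exists v, [&& (v, w) \in F, v \in U &
                                    [forall u, e v u ==> (u \in U)]]]]
  end.

Definition ptH_F (B : {set T}) (F : {set T * T}) (p : nat) : Prop :=
  Uset B F p = setT /\ forall t, Uset B F t = setT -> p <= t.

Definition ptH_B (B : {set T}) (p : nat) : Prop :=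
  (exists F, set_of_forces B F /\ ptH_F B F p) /\
  (forall F q, set_of_forces B F -> ptH_F B F q -> p <= q).

Definition thH (m : nat) : Prop :=
  (exists B p, ptH_B B p /\ m = #|B| + p) /\
  (forall B p, ptH_B B p -> m <= #|B| + p).

End Hopping.

Definition is_ceil_nat (x : R) (m : nat) : Prop :=
  Rlt (Rminus (INR m) 1) x /\ Rle x (INR m).

Definition cycle_bound (n : nat) : R :=
  Rplus (Rmult 2 (sqrt (INR (n - 2)))) 1.

(* Main.v *)
Require Import Defs.
From Stdlib Require Import Reals.
From mathcomp Require Import all_boot zify.
From Stdlib Require Import Lra Psatz.

Set Implicit Arguments.
Unset Strict Implicit.
Unset Printing Implicit Defensive.

Definition csucc (n : nat) (np : 0 < n) (v : 'I_n) : 'I_n := Ordinal (ltn_pmod (nat_of_ord v).+1 np).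
Definition cpred (n : nat) (np : 0 < n) (v : 'I_n) : 'I_n := Ordinal (ltn_pmod (nat_of_ord v + n.-1) np).

Lemma csuccK n (np : 0 < n) v : cpred np (csucc np v) = v.
Proof.
apply: val_inj => /=. rewrite modnDml.
have -> : (nat_of_ord v).+1 + n.-1 = v + n by lia.
by rewrite modnDr modn_small.
Qed.

Lemma cpredK n (np : 0 < n) v : csucc np (cpred np v) = v.
Proof.
apply: val_inj => /=. rewrite -addn1 modnDml.
have -> : nat_of_ord v + n.-1 + 1 = v + n by lia.
by rewrite modnDr modn_small.
Qed.

Lemma adj_succ n (np : 0 < n) v : cycle_adj n v (csucc np v).
Proof. by rewrite /cycle_adj /= eqxx. Qed.

Lemma adj_pred n (np : 0 < n) v : cycle_adj n v (cpred np v).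
Proof.
apply/orP; right. have := cpredK np v => /(congr1 val) /= ->. by [].
Qed.

Lemma adj_cases n (np : 0 < n) v u : cycle_adj n v u -> u = csucc np v \/ u = cpred np v.
Proof.
case/orP => /eqP H.
- by left; apply: val_inj.
- right. rewrite -(csuccK np u). congr cpred. by apply: val_inj.
Qed.

Lemma succ_closed n (np : 0 < n) (S : {set 'I_n}) x0 :
  (forall x, x \in S -> csucc np x \in S) -> x0 \in S -> forall y, y \in S.
Proof.
move=> HS Hx0.
have H : forall k, exists2 x, x \in S & val x = (x0 + k) %% n.
  elim=> [|k [x xS xv]].
    exists x0 => //. by rewrite addn0 modn_small.
  exists (csucc np x); first exact: HS.
  by rewrite /= xv -[(_ %% n).+1]addn1 modnDml addn1 addnS.
move=> y. have [x xS xv] := H (y + n - x0).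
have -> : y = x. apply: val_inj. rewrite xv.
  have -> : x0 + (y + n - x0) = y + n by have := ltn_ord x0; lia.
  by rewrite modnDr modn_small.
done.
Qed.

Lemma pred_closed n (np : 0 < n) (S : {set 'I_n}) x0 :
  (forall x, x \in S -> cpred np x \in S) -> x0 \notin S -> forall y, y \notin S.
Proof.
move=> HS Hx0.
have := @succ_closed n np (~: S) x0.
rewrite inE Hx0 => H y. have := H _ isT y. rewrite inE. apply.
move=> x. rewrite !inE. apply: contra => /HS. by rewrite csuccK.
Qed.

Definition intr n (U : {set 'I_n}) : {set 'I_n} :=
  [set v | (v \in U) && [forall u, cycle_adj n v u ==> (u \in U)]].

Lemma intr_sub n (U : {set 'I_n}) : intr U \subset U.
Proof. by apply/subsetP => v; rewrite inE => /andP []. Qed.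

Lemma intr_succ n (np : 0 < n) (U : {set 'I_n}) v : v \in intr U -> csucc np v \in U.
Proof. rewrite inE => /andP [_ /forallP /(_ (csucc np v))]. by rewrite adj_succ. Qed.

Lemma intr_pred n (np : 0 < n) (U : {set 'I_n}) v : v \in intr U -> cpred np v \in U.
Proof. rewrite inE => /andP [_ /forallP /(_ (cpred np v))]. by rewrite adj_pred. Qed.

Lemma intr_of n (np : 0 < n) (U : {set 'I_n}) v :
  v \in U -> csucc np v \in U -> cpred np v \in U -> v \in intr U.
Proof.
move=> vU sU pU. rewrite inE vU /=. apply/forallP => u. apply/implyP => /(adj_cases np).
by case=> ->.
Qed.

Lemma intr_mono n (U V : {set 'I_n}) : U \subset V -> intr U \subset intr V.
Proof.
move=> /subsetP UV. apply/subsetP => v. rewrite !inE => /andP [vU /forallP H].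
rewrite UV //=. apply/forallP => u. apply/implyP => a. apply: UV.
by have := H u; rewrite a.
Qed.

Lemma intr_bound n (np : 0 < n) (U : {set 'I_n}) :
  U != setT -> #|intr U| <= #|U| - 2.
Proof.
move=> UT.
have card : #|intr U| + #|U :\: intr U| = #|U|.
  by rewrite -(cardsID (intr U) U) (setIidPr (intr_sub U)).
case: (set_0Vmem (intr U)) => [-> | [v0 v0I]]; first by rewrite cards0.
have v0U : v0 \in U by apply: (subsetP (intr_sub U)).
suff : 2 <= #|U :\: intr U| by lia.
case E: #|U :\: intr U| => [|[|k]] //.
- exfalso. move/eqP: E. rewrite cards_eq0 => /eqP D.
  have HI : forall x, x \in U -> x \in intr U.
    move=> x xU. apply/negPn/negP => xI.
    have : x \in U :\: intr U by rewrite inE xI xU.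
    by rewrite D inE.
  move/negP: UT; apply. apply/eqP/setP => y. rewrite inE.
  apply: (succ_closed (np:=np) (S:=U) _ v0U) => x xU. exact: intr_succ (HI _ xU).
- exfalso. have [v Hv] := mem_card1 E.
  have vD : v \in U :\: intr U by rewrite Hv inE.
  move: (vD); rewrite inE => /andP [vI vU].
  have HI : forall x, x \in U -> x != v -> x \in intr U.
    move=> x xU xv. apply/negPn/negP => xI.
    have : x \in U :\: intr U by rewrite inE xI xU.
    by rewrite Hv inE (negbTE xv).
  have v0v : v0 != v by apply: contraNneq vI => <-.
  case sU: (csucc np v \in U); case pU: (cpred np v \in U).
  + by move/negP: vI; apply; apply: intr_of.
  +
    have := @succ_closed n np (U :\ v) v0.
    have -> : v0 \in U :\ v by rewrite !inE v0v v0U.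
    move=> H. suff : v \in U :\ v by rewrite !inE eqxx.
    apply: H => //.
    move=> x. rewrite !inE => /andP [xv xU].
    have xI := HI _ xU xv.
    rewrite (intr_succ np xI) andbT.
    apply/eqP => E'. move: pU. by rewrite -E' csuccK xU.
  + have := @pred_closed n np (U :\ v) v.
    rewrite !inE eqxx /= => H. suff : v0 \notin U :\ v by rewrite !inE v0v v0U.
    apply: H => //.
    move=> x. rewrite !inE => /andP [xv xU].
    have xI := HI _ xU xv.
    rewrite (intr_pred np xI) andbT.
    apply/eqP => E'. move: sU. by rewrite -E' cpredK xU.
  +
    have := @succ_closed n np (U :\ v) v0.
    have -> : v0 \in U :\ v by rewrite !inE v0v v0U.
    move=> H. suff : v \in U :\ v by rewrite !inE eqxx.
    apply: H => //.
    move=> x. rewrite !inE => /andP [xv xU].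
    have xI := HI _ xU xv.
    rewrite (intr_succ np xI) andbT.
    apply/eqP => E'. move: pU. by rewrite -E' csuccK xU.
Qed.

Lemma chron_all (T : finType) (e : rel T) blue used s :
  chron_from e blue used s -> all (fun x => x.1 \notin used) s.
Proof.
elim: s blue used => [|[v w] s IH] blue used //=.
case/andP => /and4P [_ vu _ _] /IH H. rewrite vu /=.
apply: sub_all H => x /=. by rewrite inE negb_or => /andP [].
Qed.

Lemma chron_fun (T : finType) (e : rel T) blue used s :
  chron_from e blue used s ->
  forall v w w', (v, w) \in s -> (v, w') \in s -> w = w'.
Proof.
elim: s blue used => [|[v0 w0] s IH] blue used //=.
case/andP => _ H. have A := chron_all H. have {}IH := IH _ _ H.
have nots : forall w, (v0, w) \notin s.
  move=> w. apply/negP => ins. have := allP A _ ins. by rewrite /= !inE eqxx.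
move=> v w w'; rewrite !inE => /orP [/eqP E1|h1] /orP [/eqP E2|h2].
- by case: E1 E2 => -> -> [->].
- case: E1 => E1 _. by move: (nots w'); rewrite -E1 h2.
- case: E2 => E2 _. by move: (nots w); rewrite -E2 h1.
- exact: IH h1 h2.
Qed.

Lemma sof_fun (T : finType) (e : rel T) B F :
  set_of_forces e B F -> forall v w w', (v, w) \in F -> (v, w') \in F -> w = w'.
Proof.
case=> s [H ->] v w w'. rewrite !inE. exact: chron_fun H v w w'.
Qed.

Lemma Uset_sub (T : finType) (e : rel T) B F t : Uset e B F t \subset Uset e B F t.+1.
Proof. exact: subsetUl. Qed.

Lemma Uset_mono (T : finType) (e : rel T) B F t t' : t <= t' -> Uset e B F t \subset Uset e B F t'.
Proof.
move=> /subnK <-. elim: (t' - t) => [|k IH]; first by rewrite add0n subxx.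
apply: subset_trans IH _. rewrite addSn. exact: Uset_sub.
Qed.

Lemma Uset_forced n (B : {set 'I_n}) (F : {set 'I_n * 'I_n}) (t : nat) w : w \in Uset (cycle_adj n) B F t.+1 ->
  w \in B \/ exists2 v, (v, w) \in F & v \in intr (Uset (cycle_adj n) B F t).
Proof.
elim: t w => [|t IH] w.
- rewrite /= !inE => /orP [wB|/andP [_ /existsP [v /and3P [vF vB Hv]]]]; first by left.
  right; exists v => //. by rewrite inE vB.
- rewrite [Uset _ _ _ t.+2]/= inE => /orP [/IH [wB|[v vF vI]]|]; first by left.
  + right; exists v => //. exact: (subsetP (intr_mono (Uset_sub _ _ _ _))).
  + rewrite inE => /andP [_ /existsP [v /and3P [vF vB Hv]]].
    right; exists v => //. by rewrite inE vB.
Qed.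

Lemma Uset_step n (B : {set 'I_n}) (F : {set 'I_n * 'I_n}) (t : nat) :
  (forall v w w', (v, w) \in F -> (v, w') \in F -> w = w') ->
  #|Uset (cycle_adj n) B F t.+1| <= #|B| + #|intr (Uset (cycle_adj n) B F t)|.
Proof.
move=> Ffun.
set I := intr _.
pose f v := odflt v [pick w | (v, w) \in F].
have sub : Uset (cycle_adj n) B F t.+1 \subset B :|: f @: I.
  apply/subsetP => w /Uset_forced [wB|[v vF vI]]; first by rewrite inE wB.
  rewrite inE; apply/orP; right. apply/imsetP; exists v => //.
  rewrite /f. case: pickP => [w' H|/(_ w)]; last by rewrite vF.
  exact: Ffun vF H.
apply: leq_trans (subset_leq_card sub) _.
rewrite cardsU. apply: leq_trans (leq_subr _ _) _.
by rewrite leq_add2l leq_imset_card.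
Qed.

Lemma LB_inv n (np : 0 < n) (B : {set 'I_n}) (F : {set 'I_n * 'I_n}) :
  (forall v w w', (v, w) \in F -> (v, w') \in F -> w = w') ->
  forall t, Uset (cycle_adj n) B F t != setT ->
  #|Uset (cycle_adj n) B F t| <= #|B| + t * (#|B| - 2).
Proof.
move=> Ffun. elim=> [|t IH] HT; first by rewrite mul0n addn0.
have HT' : Uset (cycle_adj n) B F t != setT.
  apply: contraNneq HT => E. rewrite eqEsubset subsetT /=.
  by rewrite -E; apply: Uset_sub.
have := Uset_step B t Ffun. have := intr_bound np HT'. have := IH HT'.
rewrite mulSn. move: (t * (#|B| - 2)) => X.
move: #|Uset _ B F t| #|intr _| #|Uset _ B F t.+1| #|B| => a1 a2 a3 a4. lia.
Qed.

Lemma LB n (np : 0 < n) (B : {set 'I_n}) (F : {set 'I_n * 'I_n}) :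
  (forall v w w', (v, w) \in F -> (v, w') \in F -> w = w') ->
  forall t, Uset (cycle_adj n) B F t = setT -> n <= #|B| + t * (#|B| - 2).
Proof.
move=> Ffun. elim=> [|t IH] HT.
  by rewrite mul0n addn0 -[X in X <= _](card_ord n) -cardsT -HT.
case E: (Uset (cycle_adj n) B F t == setT).
  move/eqP: E => /IH. rewrite mulSn. move: (t * (#|B| - 2)) => X. lia.
have := Uset_step B t Ffun. have := intr_bound np (negbT E). have := LB_inv np Ffun (negbT E).
rewrite HT cardsT card_ord mulSn. move: (t * (#|B| - 2)) => X.
move: #|Uset _ B F t| #|intr _| #|B| => a1 a2 a4. lia.
Qed.

Lemma adj_val n (v u : 'I_n) : cycle_adj n v u -> 0 < v -> v.+1 < n ->
  (u : nat) = v.+1 \/ (u : nat) = v.-1.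
Proof.
move=> /orP [/eqP ->|/eqP H] v0 vn; first by left; rewrite modn_small.
right. have un := ltn_ord u.
case E: (u.+1 == n).
  move/eqP: E H => E. by rewrite E modnn => H; rewrite H in v0.
rewrite modn_small in H; last by move/negbT: E; lia.
by rewrite H.
Qed.

Lemma chron_con k b : 3 <= b -> b <= k.+1 ->
  forall r j, r + j = k.+1 - b ->
  chron_from (cycle_adj k.+1) [set x : 'I_k.+1 | x < b + j] [set x : 'I_k.+1 | 0 < x <= j]
    [seq (inord v.+1, inord (v + b)) | v <- iota j r].
Proof.
move=> hb hbn. elim=> [|r IH] j Hr /=.
- apply/forallP => v; apply/forallP => w. rewrite /can_force.
  have wn := ltn_ord w. rewrite !inE. have -> : (w < b + j) = true by apply/idP; lia.
  by rewrite !andbF.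
- apply/andP; split.
  + rewrite /can_force !inE !inordK; try lia.
    apply/and4P; split; try (apply/idP; lia); try (apply/negP; lia).
    apply/forallP => u. apply/implyP => /adj_val. rewrite inordK; last lia.
    move=> H. rewrite inE. have [||->|->] := H; lia.
  + have E1 : inord (j + b) |: [set x : 'I_k.+1 | x < b + j] = [set x : 'I_k.+1 | x < b + j.+1].
      apply/setP => x. rewrite !inE -val_eqE /= inordK; last lia.
      apply/orP/idP => [[/eqP->|h]|h]; lia.
    have E2 : inord j.+1 |: [set x : 'I_k.+1 | 0 < x <= j] = [set x : 'I_k.+1 | 0 < x <= j.+1].
      apply/setP => x. rewrite !inE -val_eqE /= inordK; last lia.
      apply/orP/andP => [[/eqP->|/andP[h1 h2]]|[h1 h2]]; lia.
    rewrite E1 E2. apply: IH. lia.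
Qed.

Lemma cover k b (B : {set 'I_k.+1}) (F : {set 'I_k.+1 * 'I_k.+1}) : 3 <= b -> b <= k.+1 ->
  B = [set x : 'I_k.+1 | x < b] ->
  (forall v, v < k.+1 - b -> (inord v.+1, inord (v + b)) \in F) ->
  forall t (x : 'I_k.+1), x < b + t * (b - 2) -> x \in Uset (cycle_adj k.+1) B F t.
Proof.
move=> hb hbn -> HF. elim=> [|t IH] x.
  by rewrite mul0n addn0 inE.
move=> hx /=. rewrite inE. case xU: (x \in Uset _ _ _ t) => //=.
have xge : b + t * (b - 2) <= x.
  rewrite leqNgt. apply/negP => H. by rewrite IH in xU.
have xn := ltn_ord x.
rewrite inE xU /=. apply/existsP. exists (inord (x - b).+1).
have ex : x = inord (x - b + b) :> 'I_k.+1.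
  apply: val_inj. rewrite /= inordK; lia.
apply/and3P; split.
- rewrite {2}ex. apply: HF. lia.
- apply: IH. rewrite inordK; last lia. rewrite mulSn in hx. lia.
- apply/forallP => u. apply/implyP => /adj_val. rewrite inordK; last lia.
  move=> H. apply: IH. rewrite mulSn in hx. have [||->|->] := H; lia.
Qed.

Lemma ceil_facts n m : 3 <= n -> is_ceil_nat (cycle_bound n) m ->
  3 <= m /\ 4 * (n - 2) <= (m - 1) * (m - 1) /\ (m - 2) * (m - 2) < 4 * (n - 2).
Proof.
move=> hn [h1 h2]. rewrite /cycle_bound in h1 h2.
set a := INR (n - 2) in h1 h2.
have ha : Rle 1 a. rewrite /a. apply: (le_INR 1). apply/leP. lia.
set s := sqrt a in h1 h2.
have s0 : Rle 0 s by apply: sqrt_pos.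
have ss : Rmult s s = a by apply: sqrt_sqrt; lra.
have s1 : Rle 1 s by nra.
have h0 : INR 0 = R0 := erefl.
have m3 : 3 <= m.
  apply/leP. apply: INR_le. rewrite !S_INR h0. lra.
case: m m3 h1 h2 => [|[|[|m']]] // _ h1 h2.
rewrite !subSS !subn0.
split; first done. split.
- apply/leP. apply: INR_le. rewrite !mult_INR !S_INR h0 -/a. rewrite !S_INR in h1 h2. nra.
- apply/ltP. apply: INR_lt. rewrite !mult_INR !S_INR h0 -/a. rewrite !S_INR in h1 h2. nra.
Qed.

Lemma card_lt k b : b <= k -> #|[set x : 'I_k | x < b]| = b.
Proof.
move=> hb.
have -> : [set x : 'I_k | x < b] = [set widen_ord hb i | i : 'I_b].
  apply/setP => x. rewrite inE. apply/idP/imsetP => [xb|[i _ ->]] //=.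
  exists (Ordinal xb) => //. by apply: val_inj.
rewrite card_imset ?card_ord //. move=> i j /(congr1 val) /= E. exact: val_inj.
Qed.

Lemma amgm x y : 4 * (x * y) <= (x + y) * (x + y).
Proof.
wlog h : x y / x <= y.
  move=> W. case: (leqP x y) => h; first exact: W.
  rewrite [x * y]mulnC [x + y]addnC. apply: W. exact: ltnW.
rewrite -(subnKC h). move: (y - x) => d. nia.
Qed.

Theorem proposition3p6 (n : nat) :
  3 <= n ->
  forall m : nat, is_ceil_nat (cycle_bound n) m -> thH (cycle_adj n) m.
Proof.
move=> hn m hm. have [m3 [hA hB]] := ceil_facts hn hm.
case: n hn hm hA hB => [|k] // hn hm hA hB.
have np : 0 < k.+1 by [].
have LBm : forall (B : {set 'I_k.+1}) F t, set_of_forces (cycle_adj k.+1) B F ->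
    Uset (cycle_adj k.+1) B F t = setT -> m <= #|B| + t.
  move=> B F t sF HU. have := LB np (sof_fun sF) HU.
  move: #|B| => b Hn.
  case: b Hn => [|[|c]] Hn; try lia.
  have Hc : k.+1 - 2 <= t.+1 * c.
    rewrite (_ : c.+2 - 2 = c) in Hn; last lia.
    rewrite mulSn. move: (t * c) Hn => X Hn. lia.
  have amgm := amgm t.+1 c.
  rewrite leqNgt; apply/negP => Hlt.
  have Y : t.+1 + c <= m - 2 by lia.
  have := leq_mul Y Y. lia.
set K := m - 1.
set h := K./2.
have hK := odd_double_half K. rewrite -/h -muln2 in hK.
have hh : 1 <= h by case: (odd K) hK; lia.
set b := 2 + h. set p := K - h - 1.
have hb : 3 <= b by rewrite /b; lia.
have hbp : b + p = m by rewrite /b /p; lia.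
have hbn : b <= k.+1.
  rewrite /b. have e : m - 2 = K - 1 by rewrite /K; lia.
  rewrite e in hB. case: (odd K) hK => /= hK; nia.
have hcov : k.+1 <= b + p * (b - 2).
  have e1 : b - 2 = h by rewrite /b; lia.
  rewrite e1 /p. rewrite -/K in hA. case: (odd K) hK => /= hK; nia.
pose B := [set x : 'I_k.+1 | x < b].
pose s := [seq (inord v.+1, inord (v + b)) : 'I_k.+1 * 'I_k.+1 | v <- iota 0 (k.+1 - b)].
pose F := [set x in s].
have sofF : set_of_forces (cycle_adj k.+1) B F.
  exists s; split => //. rewrite /chronological_list.
  have := chron_con hb hbn (r := k.+1 - b) (j := 0) (addn0 _).
  rewrite addn0. have -> : [set x : 'I_k.+1 | 0 < x <= 0] = set0.
    by apply/setP => x; rewrite !inE; lia.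
  done.
have Cov : Uset (cycle_adj k.+1) B F p = setT.
  apply/setP => x. rewrite inE. apply: (cover (b := b)) => //.
  - move=> v hv. rewrite inE. apply: map_f. rewrite mem_iota. lia.
  - have := ltn_ord x. lia.
have cB : #|B| = b by rewrite card_lt.
split.
- exists B, p. split; last by rewrite cB.
  split.
  + exists F; split => //. split => // t Ht. have := LBm _ _ _ sofF Ht; rewrite cB. lia.
  + move=> F' q sF' [Hq _]. have := LBm _ _ _ sF' Hq; rewrite cB. lia.
- move=> B' p' [[F' [sF' [Hq _]]] _]. exact: LBm _ _ _ sF' Hq.
Qed.
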